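(* In the model of the context, suppose $F_e$ is an equilibrium arrival distribution for the variant in which walk-ins may only arrive in $[0,T]$, and suppose $F_e$ has no atom at $0$. Then $F_e$ is also an equilibrium arrival distribution for the variant in which walk-ins may arrive at any time in $(-\infty,T]$.
   Context: Model: single server that starts serving at time $0$ (no service before $0$; in the early-arrival variant, walk-ins arriving before $0$ queue in arrival order), walk-ins admitted up to time $T$, service times i.i.d. exponential with rate $\mu$, $M$ scheduled customers at deterministic times $0\le\tau_1<\dots<\tau_M\le T$ with non-preemptive priority over walk-ins (otherwise FCFS; simultaneous walk-ins ordered uniformly at random), Poisson($\lambda$) number of walk-ins each independently choosing its arrival time from a common cdf $F$ on the admissible set ($[0,T]$ or $(-\infty,T]$). Waiting time = time from arrival until start of service; $E_w(t)$ is the expected waiting time of a walk-in arriving at $t$ when all others use $F$. $F_e$ is an equilibrium arrival distribution (for a given admissible set) if there is a constant $E_w$ with $E_w(t)=E_w$ on the support of $F_e$ and $E_w(t)\ge E_w$ at every admissible $t$ outside it. An atom at $0$ means $F_e(0)>0$. *)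

(* Defs.v *)
From HB Require Import structures.
From mathcomp Require Import all_boot all_order all_algebra.
From mathcomp Require Import all_classical all_reals all_analysis.
Set Implicit Arguments. Unset Strict Implicit. Unset Printing Implicit Defensive.
Import Order.TTheory GRing.Theory Num.Theory.
Local Open Scope classical_set_scope.
Local Open Scope ring_scope.

(* A customer: arrival time, scheduled (priority) flag, tie-breaking key
   (uniform random rank among simultaneous walk-ins), service time. *)
Record cust (R : realType) := Cust
  { c_arr : R; c_sched : bool; c_tie : R; c_serv : R }.

Definition cdef (R : realType) : cust R := Cust 0 false 0 0.

Definition cprec (R : realType) (c d : cust R) : bool :=
  (c_sched c && ~~ c_sched d) ||
  ((c_sched c == c_sched d) &&
   ((c_arr c < c_arr d) || ((c_arr c == c_arr d) && (c_tie c < c_tie d)))).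

Definition pick (R : realType) (cs : seq (cust R)) (cands : seq nat) : option nat :=
  foldr (fun i acc => match acc with
                      | None => Some i
                      | Some j => if cprec (nth (cdef R) cs i) (nth (cdef R) cs j)
                                  then Some i else Some j
                      end) None cands.

Definition min_arr (R : realType) (cs : seq (cust R)) (us : seq nat) : R :=
  foldr (fun i m => Num.min (c_arr (nth (cdef R) cs i)) m)
        (c_arr (nth (cdef R) cs (head 0%N us))) us.

(* Start-of-service time of customer k.  [clock] is the time at which the
   server becomes free, [us] the unserved customers. *)
Fixpoint start_time (R : realType) (cs : seq (cust R)) (fuel : nat) (clock : R)
    (us : seq nat) (k : nat) : R :=
  match fuel with
  | 0 => clock
  | f.+1 =>
    let clk := if has (fun i => c_arr (nth (cdef R) cs i) <= clock) us
               then clock else min_arr cs us in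
    match pick cs [seq i <- us | c_arr (nth (cdef R) cs i) <= clk] with
    | None => clk
    | Some i => if i == k then clk
                else start_time cs f (clk + c_serv (nth (cdef R) cs i)) (rem i us) k
    end
  end.

(* Waiting time of the tagged walk-in arriving at t with tie key u0, given
   the other walk-ins (arrival, tie key, service) and the service times ss of
   the scheduled customers arriving at times tau.  The server opens at 0. *)
Definition wait_time (R : realType) (tau ss : seq R) (t u0 : R)
    (walkins : seq (R * R * R)) : R :=
  let cs := Cust t false u0 0
            :: [seq Cust w.1.1 false w.1.2 w.2 | w <- walkins]
            ++ [seq Cust p.1 true 0 p.2 | p <- zip tau ss] in
  start_time cs (size cs) 0 (iota 0 (size cs)) 0%N - t.

Local Open Scope ereal_scope.

Definition exp_int (R : realType) (mu : R) (g : R -> \bar R) : \bar R :=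
  \int[lebesgue_measure]_(s in [set s : R | (0 <= s)%R])
     ((mu * expR (- (mu * s)))%:E * g s).

Definition unif_int (R : realType) (g : R -> \bar R) : \bar R :=
  \int[lebesgue_measure]_(u in [set u : R | (0 <= u <= 1)%R]) g u.

Fixpoint walkin_int (R : realType) (P : probability R R) (mu : R) (n : nat)
    (g : seq (R * R * R) -> \bar R) : \bar R :=
  match n with
  | 0 => g [::]
  | n'.+1 => \int[P]_a unif_int (fun u => exp_int mu (fun s =>
               walkin_int P mu n' (fun w => g ((a, u, s) :: w))))
  end.

Fixpoint sched_int (R : realType) (mu : R) (m : nat) (g : seq R -> \bar R) : \bar R :=
  match m with
  | 0 => g [::]
  | m'.+1 => exp_int mu (fun s => sched_int mu m' (fun l => g (s :: l)))
  end.

Definition Ew (R : realType) (lambda mu : R) (tau : seq R) (P : probability R R)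
    (t : R) : \bar R :=
  \sum_(0 <= n <oo)
    ((expR (- lambda) * lambda ^+ n / (n`!)%:R)%:E *
     unif_int (fun u0 => sched_int mu (size tau) (fun ss =>
        walkin_int P mu n (fun w => (wait_time tau ss t u0 w)%:E)))).

Definition dist_support (R : realType) (P : probability R R) : set R :=
  [set x | forall e : R, (0 < e)%R -> 0 < P `](x - e)%R, (x + e)%R[%classic].

Definition is_equilibrium (R : realType) (lambda mu : R) (tau : seq R)
    (P : probability R R) (A : set R) : Prop :=
  P (~` A) = 0 /\
  exists Ew0 : R,
    (forall t, dist_support P t -> Ew lambda mu tau P t = Ew0%:E) /\
    (forall t, A t -> ~ dist_support P t -> Ew0%:E <= Ew lambda mu tau P t).

(* Main.v *)
Require Import Defs.
From HB Require Import structures.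
From mathcomp Require Import all_boot all_order all_algebra.
From mathcomp Require Import all_classical all_reals all_analysis.
Import Order.TTheory GRing.Theory Num.Theory.
Local Open Scope classical_set_scope.
Local Open Scope ring_scope.
Set Implicit Arguments. Unset Strict Implicit.

Section Q.
Variable R : realType.
Implicit Types cs : seq (cust R).

Lemma pick_mem cs l i : Defs.pick cs l = Some i -> (i \in l)%N.
Proof.
elim: l i => [|a l IH] i //=.
case E: (Defs.pick cs l) => [j|] /=.
  case: ifP => _ [<-]; first by rewrite mem_head.
  by rewrite in_cons (IH _ E) orbT.
by case=> <-; rewrite mem_head.
Qed.

Lemma pick_cons cs a l : exists i, Defs.pick cs (a :: l) = Some i.
Proof.
rewrite /=; case: (Defs.pick cs l) => [j|]; last by exists a.
by case: ifP => _; eexists.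
Qed.

Lemma pick_ext cs cs' l :
  (forall i j, (i \in l)%N -> (j \in l)%N ->
     cprec (nth (cdef R) cs i) (nth (cdef R) cs j) =
     cprec (nth (cdef R) cs' i) (nth (cdef R) cs' j)) ->
  Defs.pick cs l = Defs.pick cs' l.
Proof.
elim: l => [|a l IH] //= H.
have H' : forall i j, (i \in l)%N -> (j \in l)%N ->
     cprec (nth (cdef R) cs i) (nth (cdef R) cs j) =
     cprec (nth (cdef R) cs' i) (nth (cdef R) cs' j).
  by move=> i j il jl; apply: H; rewrite in_cons ?il ?jl orbT.
rewrite -(IH H').
case E: (Defs.pick cs l) => [j|] //.
rewrite H // ?mem_head // in_cons (pick_mem E) orbT //.
Qed.

Lemma foldr_min_mem (f : nat -> R) d l :
  foldr (fun i m => Num.min (f i) m) d l = d \/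
  exists2 j, (j \in l)%N & foldr (fun i m => Num.min (f i) m) d l = f j.
Proof.
elim: l => [|a l IH] /=; first by left.
rewrite /Num.min; case: ifP => _.
  by right; exists a => //; rewrite mem_head.
case: IH => [->|[j jl ->]]; first by left.
by right; exists j => //; rewrite in_cons jl orbT.
Qed.

Lemma min_arr_mem cs us : us != [::] ->
  exists2 j, (j \in us)%N & min_arr cs us = c_arr (nth (cdef R) cs j).
Proof.
case: us => [|a l] // _; rewrite /min_arr.
case: (foldr_min_mem (fun i => c_arr (nth (cdef R) cs i))
         (c_arr (nth (cdef R) cs (head 0%N (a :: l)))) (a :: l)) => [->|[j jl ->]].
  by exists a => //; rewrite mem_head.
by exists j.
Qed.

Lemma mem_rem_neq (x y : nat) s : x != y -> (x \in s)%N -> (x \in rem y s)%N.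
Proof.
elim: s => [|a s IH] //= xy; rewrite in_cons => /orP[/eqP <-|xs].
  by rewrite (negbTE xy) mem_head.
by case: ifP => _ //; rewrite in_cons IH ?orbT.
Qed.

Lemma start_ge cs fuel clock us :
  (0 \in us)%N -> (size us <= fuel)%N ->
  c_arr (nth (cdef R) cs 0) <= start_time cs fuel clock us 0.
Proof.
elim: fuel clock us => [|f IH] clock us u0 sz.
  by move: sz; case: us u0.
rewrite /=.
set clk := (if has _ _ then _ else _).
have [j ju jc] : exists2 j, (j \in us)%N & c_arr (nth (cdef R) cs j) <= clk.
  rewrite /clk; case: ifP => [/hasP [j ju jc]|_]; first by exists j.
  have [|j ju ->] := @min_arr_mem cs us; first by case: (us) u0.
  by exists j.
set L := [seq i <- us | c_arr (nth (cdef R) cs i) <= clk].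
have jL : (j \in L)%N by rewrite mem_filter jc.
have [i E] : exists i, Defs.pick cs L = Some i.
  by case: (L) jL => // a l _; exact: pick_cons.
have iL := pick_mem E; rewrite E.
move: iL; rewrite mem_filter => /andP[ic iu].
case: ifP => [/eqP i0|i0]; first by rewrite -i0.
apply: IH; first by apply: mem_rem_neq => //; rewrite eq_sym i0.
by rewrite size_rem //; move: sz; case: (size us).
Qed.

Definition good (c : cust R) := (0 <= c_serv c) && (c_sched c || (0 < c_arr c)).

Lemma cprec_tag (t u0 : R) d : t <= 0 -> good d ->
  cprec (Cust t false u0 0) d = cprec (Cust 0 false u0 0) d /\
  cprec d (Cust t false u0 0) = cprec d (Cust 0 false u0 0).
Proof.
move=> t0 /andP[_ /orP[sd|ad]]; rewrite /cprec /= ?sd //=.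
have tl : t < c_arr d by apply: le_lt_trans ad.
have h1 : (c_arr d < t) = false by apply/negbTE; rewrite -leNgt ltW.
have h2 : (c_arr d == t) = false by rewrite gt_eqF.
have h3 : (c_arr d < 0) = false by apply/negbTE; rewrite -leNgt ltW.
have h4 : (c_arr d == 0) = false by rewrite gt_eqF.
by rewrite tl ad h1 h2 h3 h4.
Qed.

Lemma cprec_self (t u0 : R) : cprec (Cust t false u0 0) (Cust t false u0 0) = false.
Proof. by rewrite /cprec /= !ltxx eqxx. Qed.

Lemma start_eq cs cs' t u0 fuel clock us :
  t <= 0 ->
  nth (cdef R) cs 0 = Cust t false u0 0 -> nth (cdef R) cs' 0 = Cust 0 false u0 0 ->
  (forall i, i != 0%N -> nth (cdef R) cs i = nth (cdef R) cs' i) ->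
  (forall i, (i \in us)%N -> i != 0%N -> good (nth (cdef R) cs i)) ->
  0 <= clock -> (0 \in us)%N ->
  start_time cs fuel clock us 0 = start_time cs' fuel clock us 0.
Proof.
move=> t0 c0 c0' ceq gd.
elim: fuel clock us gd => [|f IH] clock us gd cl0 u0s //=.
have -> : has (fun i => c_arr (nth (cdef R) cs i) <= clock) us.
  by apply/hasP; exists 0%N => //; rewrite c0 /= (le_trans t0).
have -> : has (fun i => c_arr (nth (cdef R) cs' i) <= clock) us.
  by apply/hasP; exists 0%N => //; rewrite c0' /=.
have -> : [seq i <- us | c_arr (nth (cdef R) cs' i) <= clock] =
          [seq i <- us | c_arr (nth (cdef R) cs i) <= clock].
  apply: eq_in_filter => i iu; case: (eqVneq i 0%N) => [->|i0].
    by rewrite c0 c0' /= cl0 (le_trans t0).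
  by rewrite ceq.
set L := [seq i <- us | _].
have LE : forall i, (i \in L)%N -> (i \in us)%N by move=> i; rewrite mem_filter => /andP[].
rewrite -(pick_ext (cs := cs)); last first.
  move=> i j /LE iu /LE ju.
  case: (eqVneq i 0%N) => [->|i0]; case: (eqVneq j 0%N) => [->|j0].
  - by rewrite c0 c0' !cprec_self.
  - by rewrite c0 c0' -(ceq j) //; case: (cprec_tag u0 t0 (gd j ju j0)).
  - by rewrite c0 c0' -(ceq i) //; case: (cprec_tag u0 t0 (gd i iu i0)).
  - by rewrite !ceq.
case E: (Defs.pick cs L) => [i|] //.
case: ifP => // /negbT i0.
have iu := LE _ (pick_mem E).
rewrite -ceq //; apply: IH.
- by move=> k /mem_rem ku; exact: gd.
- by rewrite addr_ge0 //; case/andP: (gd i iu i0).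
- by apply: mem_rem_neq => //; rewrite eq_sym.
Qed.
Lemma wait_ge0 (tau ss : seq R) t u0 w : 0 <= wait_time tau ss t u0 w.
Proof.
rewrite /wait_time subr_ge0.
set cs := (Cust t false u0 0 :: _).
have := @start_ge cs (size cs) 0 (iota 0 (size cs)).
rewrite size_iota leqnn /=; apply.
by rewrite /cs /= in_cons eqxx.
by [].
Qed.

Definition goodw (x : R * R * R) := (0 < x.1.1) && (0 <= x.2).

Lemma zip_good (tau ss : seq R) : all (fun x => 0 <= x) ss ->
  all good [seq Cust p.1 true 0 p.2 | p <- zip tau ss].
Proof.
elim: tau ss => [|a tau IH] [|b ss] //= /andP[b0 H].
by rewrite /good /= b0 /= IH.
Qed.

Lemma wait_rel (tau ss : seq R) t u0 w : t <= 0 ->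
  all goodw w -> all (fun x => 0 <= x) ss ->
  wait_time tau ss t u0 w = wait_time tau ss 0 u0 w - t.
Proof.
move=> t0 gw gs; rewrite /wait_time subr0.
set L := (_ ++ _).
have gL : all good L.
  rewrite all_cat zip_good // andbT all_map.
  apply: (sub_all _ gw) => x; rewrite /goodw /good /= => /andP[a s].
  by rewrite s a.
congr (_ - _).
apply: (@start_eq _ _ t u0) => //.
- by case.
- move=> i; rewrite mem_iota /= => ilt; case: i ilt => // j jlt _ /=.
  by apply: (all_nthP (cdef R) gL).
Qed.
End Q.

Section Int.
Local Open Scope ereal_scope.
Import HBNNSimple.
Lemma int_le_ge0 d (T : measurableType d) (R : realType) (mu : measure T R)
  (D : set T) (f g : T -> \bar R) :
  (forall x, D x -> 0 <= f x) -> (forall x, D x -> f x <= g x) ->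
  \int[mu]_(x in D) f x <= \int[mu]_(x in D) g x.
Proof.
move=> f0 fg.
have g0 : forall x, D x -> 0 <= g x by move=> x Dx; exact: le_trans (f0 x Dx) (fg x Dx).
rewrite !ge0_integralE//; apply: le_ereal_sup => _ [h /= hf <-].
exists h => //= x; apply: le_trans (hf x) _.
rewrite /patch; case: ifPn => // /set_mem; exact: fg.
Qed.

Lemma int_ae_le d (T : measurableType d) (R : realType) (mu : measure T R)
  (A : set T) (f g : T -> \bar R) :
  measurable A -> mu (~` A) = 0 ->
  (forall x, 0 <= f x) -> (forall x, 0 <= g x) -> (forall x, A x -> f x <= g x) ->
  \int[mu]_x f x <= \int[mu]_x g x.
Proof.
move=> mA muA f0 g0 fg.
rewrite [X in X <= _]ge0_integralE//; apply: ge_ereal_sup => _ [h /= hf <-].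
rewrite -integralT_nnsfun.
rewrite (ge0_negligible_integral _ (N := ~` A)) //; last 3 first.
- exact: measurableC.
- apply/measurable_realfun.measurable_EFinP. exact: measurable_funPT.
- by move=> x _; rewrite lee_fin.
rewrite setTD setCK.
apply: (@le_trans _ _ (\int[mu]_(x in A) g x)).
  apply: int_le_ge0 => x Ax; first by rewrite lee_fin.
  apply: le_trans (hf x) _; rewrite patch_setT; exact: fg.
rewrite integral_mkcond; apply: int_le_ge0 => x _.
  by rewrite /patch; case: ifPn.
by rewrite /patch; case: ifPn.
Qed.



End Int.

Section I.
Variable R : realType.
Local Open Scope ereal_scope.

Lemma exp_int_ge0 (mu : R) g : (0 <= mu)%R -> (forall s, (0 <= s)%R -> 0 <= g s) ->
  0 <= exp_int mu g.
Proof.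
move=> mu0 g0; apply: integral_ge0 => s /= s0; apply: mule_ge0; last exact: g0.
by rewrite lee_fin mulr_ge0 // expR_ge0.
Qed.

Lemma exp_int_le (mu : R) g h : (0 <= mu)%R -> (forall s, (0 <= s)%R -> 0 <= g s) ->
  (forall s, (0 <= s)%R -> g s <= h s) -> exp_int mu g <= exp_int mu h.
Proof.
move=> mu0 g0 gh; apply: int_le_ge0 => s /= s0.
  by apply: mule_ge0; [rewrite lee_fin mulr_ge0 // expR_ge0|exact: g0].
by apply: lee_wpmul2l; [rewrite lee_fin mulr_ge0 // expR_ge0|exact: gh].
Qed.

Lemma unif_int_ge0 (g : R -> \bar R) : (forall u, 0 <= g u) -> 0 <= unif_int g.
Proof. by move=> g0; apply: integral_ge0. Qed.

Lemma unif_int_le (g h : R -> \bar R) : (forall u, 0 <= g u) ->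
  (forall u, g u <= h u) -> unif_int g <= unif_int h.
Proof. by move=> g0 gh; apply: int_le_ge0. Qed.

Lemma sched_ge0 (mu : R) m g : (0 <= mu)%R -> (forall l, 0 <= g l) ->
  0 <= sched_int mu m g.
Proof.
move=> mu0; elim: m g => [|m IH] g g0 /=; first exact: g0.
by apply: exp_int_ge0 => // s _; apply: IH.
Qed.

Lemma sched_le (mu : R) m g h : (0 <= mu)%R -> (forall l, 0 <= g l) ->
  (forall l, all (fun x => 0 <= x)%R l -> g l <= h l) ->
  sched_int mu m g <= sched_int mu m h.
Proof.
move=> mu0; elim: m g h => [|m IH] g h g0 gh /=; first exact: gh.
apply: exp_int_le => //.
  by move=> s _; apply: sched_ge0.
move=> s s0; apply: IH => // l al; apply: gh; by rewrite /= s0.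
Qed.

Lemma walkin_ge0 (P : probability R R) (mu : R) n g : (0 <= mu)%R ->
  (forall w, 0 <= g w) -> 0 <= walkin_int P mu n g.
Proof.
move=> mu0; elim: n g => [|n IH] g g0 /=; first exact: g0.
apply: integral_ge0 => a _; apply: unif_int_ge0 => u.
by apply: exp_int_ge0 => // s _; apply: IH.
Qed.

Lemma walkin_le (P : probability R R) (mu : R) n g h : (0 <= mu)%R ->
  P (`]-oo, (0%R : R)]%classic : set R) = 0 ->
  (forall w, 0 <= g w) -> (forall w, 0 <= h w) ->
  (forall w, all (@goodw R) w -> g w <= h w) ->
  walkin_int P mu n g <= walkin_int P mu n h.
Proof.
move=> mu0 P0; elim: n g h => [|n IH] g h g0 h0 gh /=; first exact: gh.
apply: (@int_ae_le _ _ _ _ (~` (`]-oo, (0%R : R)]%classic : set R))).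
- apply: measurableC; exact: measurable_itv.
- by rewrite setCK.
- move=> a; apply: unif_int_ge0 => u.
  by apply: exp_int_ge0 => // s _; apply: walkin_ge0.
- move=> a; apply: unif_int_ge0 => u.
  by apply: exp_int_ge0 => // s _; apply: walkin_ge0.
move=> a /= Aa.
have a0 : (0 < a)%R.
  by rewrite ltNge; apply/negP => a0; apply: Aa; rewrite /= in_itv /= a0.
apply: unif_int_le.
  by move=> u; apply: exp_int_ge0 => // s _; apply: walkin_ge0.
move=> u; apply: exp_int_le => //.
  by move=> s _; apply: walkin_ge0.
move=> s s0; apply: IH => // w gw; apply: gh.
by rewrite /= gw andbT /goodw /= a0 s0.
Qed.

Lemma Ew_le (lambda mu : R) (tau : seq R) (P : probability R R) (t : R) :
  (0 <= lambda)%R -> (0 <= mu)%R -> P (`]-oo, (0%R : R)]%classic : set R) = 0 -> (t <= 0)%R ->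
  Ew lambda mu tau P 0 <= Ew lambda mu tau P t.
Proof.
move=> l0 mu0 P0 t0; rewrite /Ew.
have c0 : forall n, 0 <= (expR (- lambda) * lambda ^+ n / (n`!)%:R)%:E.
  by move=> n; rewrite lee_fin !mulr_ge0 // ?expR_ge0 ?exprn_ge0 // invr_ge0.
apply: lee_nneseries.
  move=> n _ _; apply: mule_ge0 => //; apply: unif_int_ge0 => u.
  apply: sched_ge0 => // l; apply: walkin_ge0 => // w.
  by rewrite lee_fin wait_ge0.
move=> n _; apply: lee_wpmul2l => //.
apply: unif_int_le.
  move=> u; apply: sched_ge0 => // l; apply: walkin_ge0 => // w.
  by rewrite lee_fin wait_ge0.
move=> u; apply: sched_le => //.
  by move=> l; apply: walkin_ge0 => // w; rewrite lee_fin wait_ge0.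
move=> l al; apply: walkin_le => //.
- by move=> w; rewrite lee_fin wait_ge0.
- by move=> w; rewrite lee_fin wait_ge0.
move=> w gw; rewrite lee_fin (@wait_rel R tau l t u w t0 gw al).
by rewrite lerDl oppr_ge0.
Qed.

End I.

Theorem mainTheorem6 (R : realType) (lambda mu T : R) (tau : seq R)
    (P : probability R R) :
  0 <= lambda -> 0 < mu -> 0 <= T ->
  sorted <%R tau -> all (fun x => 0 <= x <= T) tau ->
  is_equilibrium lambda mu tau P [set t | 0 <= t <= T] ->
  P `]-oo, 0]%classic = 0%E ->
  is_equilibrium lambda mu tau P [set t | t <= T].
Proof.
move=> l0 mu0 T0 _ _ [PA [E0 [Hs Hn]]] P0.
have e1 : [set t | t <= T] = `]-oo, T]%classic.
  by apply/seteqP; split => x; rewrite /= in_itv.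
have e2 : [set t | 0 <= t <= T] = `[0, T]%classic.
  by apply/seteqP; split => x; rewrite /= in_itv.
split.
  apply: (subset_measure0 _ _ _ PA).
  - by rewrite e1; apply: measurableC; exact: measurable_itv.
  - by rewrite e2; apply: measurableC; exact: measurable_itv.
  - by move=> x /= H1 /andP[_ H2]; apply: H1.
exists E0; split; first exact: Hs.
move=> t tT tns; case: (leP 0 t) => [t0|tneg].
  by apply: Hn => //; rewrite /= t0.
apply: (le_trans _ (Ew_le tau l0 (ltW mu0) P0 (ltW tneg))).
case: (pselect (dist_support P 0)) => [s0|ns0].
  by rewrite (Hs _ s0).
by apply: Hn => //; rewrite /= lexx.
Qed.
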